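(* Let $n\ge2$, $\rho\ge0$, and let $\lambda$ be an eigenvalue of $K_n(\rho)=\left[\rho^{|j-k|}\right]_{j,k=1}^n$. Then $\lambda$ is extraordinary iff $|\lambda|>n$.
   Context: Convention $\rho^0=1$. Let $\sigma(\rho,\theta)=\frac{1-\rho^2}{1-2\rho\cos\theta+\rho^2}$ and $\mathrm{range}\{\sigma(\rho,\theta)\}=\{\sigma(\rho,\theta):\theta\in(-\pi,\pi]\}$. For real $\rho\notin\{-1,1\}$, an eigenvalue of $K_n(\rho)$ is called ordinary if it lies in $\mathrm{range}\{\sigma(\rho,\theta)\}$; for $\rho\in\{0,\pm1\}$ all eigenvalues are called ordinary. An eigenvalue is extraordinary if it is not ordinary. *)

(* Defs.v *)
From HB Require Import structures.
From mathcomp Require Import all_boot all_order all_algebra.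
From mathcomp Require Import all_classical all_reals all_analysis.
Set Implicit Arguments. Unset Strict Implicit. Unset Printing Implicit Defensive.
Import Order.TTheory GRing.Theory Num.Theory.
Local Open Scope ring_scope.

(* Kac-Murdock-Szego matrix K_n(rho) = [rho^|j-k|]; rho ^+ 0 = 1 (convention rho^0 = 1). *)
Definition KMS (R : realType) (n : nat) (rho : R) : 'M[R]_n :=
  \matrix_(j < n, k < n) rho ^+ `|(j : nat) - (k : nat)|%N.

Definition sigma (R : realType) (rho theta : R) : R :=
  (1 - rho ^+ 2) / (1 - 2 * rho * cos theta + rho ^+ 2).

Definition sigma_range (R : realType) (rho : R) : set R :=
  [set sigma rho theta | theta in [set t : R | - pi < t <= pi]].

Definition ordinary (R : realType) (rho lam : R) : Prop :=
  if (rho == 0) || (rho == 1) || (rho == -1) then True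
  else sigma_range rho lam.

Definition extraordinary (R : realType) (rho lam : R) : Prop := ~ ordinary rho lam.

(* Main.v *)
Require Import Defs.
From HB Require Import structures.
From mathcomp Require Import all_boot all_order all_algebra.
From mathcomp Require Import all_classical all_reals all_analysis.
From mathcomp Require Import ring lra zify.
Import Order.TTheory GRing.Theory Num.Theory.
Local Open Scope ring_scope.

Section Cheb.
Variable R : realFieldType.
Fixpoint ch (c : R) (k : nat) : R :=
  match k with 0 => 0 | 1 => 1 | (S k' as k1).+1 => c * ch c k1 - ch c k' end.

Lemma chSS c k : ch c k.+2 = c * ch c k.+1 - ch c k.
Proof. by []. Qed.

Lemma cassini c k : ch c k.+1 ^+ 2 - ch c k.+2 * ch c k = 1.
Proof.
elim: k => [|k IH]; first by rewrite /= mulr0 subr0 expr1n.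
move: IH; rewrite !chSS => IH; rewrite -[RHS]IH; ring.
Qed.

Lemma ch_le c k : `|c| <= 2 -> `|ch c k| <= k%:R.
Proof.
move=> hc; elim: k => [|k IH]; first by rewrite /= normr0.
have cs := cassini c k; rewrite chSS in cs.
set a := ch c k.+1 in cs *; set b := ch c k in cs IH *.
have h1 : (a - c / 2 * b) ^+ 2 <= 1.
  have hc2 : c ^+ 2 <= 4.
    rewrite -[c ^+ 2]real_normK ?num_real //.
    have : 0 <= `|c| by [].
    move: hc => hc h0. nra.
  have e : (a - c / 2 * b) ^+ 2 = (a ^+ 2 - (c * a - b) * b) - (1 - c ^+ 2 / 4) * b ^+ 2.
    by field; rewrite ?pnatr_eq0.
  rewrite cs in e; rewrite e. have : 0 <= b ^+ 2 by rewrite sqr_ge0. nra.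
have h2 : `|a - c / 2 * b| <= 1.
  rewrite ler_norml; apply/andP; split; nra.
have h3 : `|c / 2 * b| <= `|b|.
  rewrite normrM ler_piMl ?normr_ge0 //.
  move: hc; rewrite !ler_norml => /andP[hc1 hc2]; apply/andP; split; lra.
rewrite -addn1 natrD.
have := ler_normD (a - c / 2 * b) (c / 2 * b).
rewrite subrK => h4. lra.
Qed.

Lemma ch_opp c k : ch (- c) k = (-1) ^+ k.+1 * ch c k.
Proof.
elim/ltn_ind: k => -[|[|k]] IH; first by rewrite /= mulr0.
  by rewrite /= expr2 mulrNN !mulr1.
rewrite !chSS !IH //.
rewrite !exprS; ring.
Qed.

Lemma ch_gt_pos c k : 2 < c -> 0 <= ch c k /\ 1 <= ch c k.+1 - ch c k.
Proof.
move=> hc; elim: k => [|k [IH1 IH2]]; first by rewrite /= subr0 lexx.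
split; first lra.
rewrite chSS.
have : 0 <= (c - 2) * ch c k.+1 by apply: mulr_ge0; lra.
lra.
Qed.

Lemma ch_gt c k : 2 < c -> (2 <= k)%N -> k%:R < ch c k.
Proof.
move=> hc; elim: k => [|k IH] //; case: k IH => [|k] IH // .
case: k IH => [|k] IH _; first by rewrite /= mulr1 subr0.
have [_ h] := ch_gt_pos c k.+2 hc.
have := IH isT. rewrite -[(k.+3)%:R]natr1. lra.
Qed.

Lemma ch_gt_abs c k : 2 < `|c| -> (2 <= k)%N -> k%:R < `|ch c k|.
Proof.
move=> hc hk; case: (lerP 0 c) => c0.
  rewrite ger0_norm in hc => //.
  have := ch_gt c k hc hk => h; rewrite ger0_norm //.
  apply: le_trans (ltW h); exact: ler0n.
rewrite ltr0_norm // in hc.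
have := ch_gt (-c) k hc hk; rewrite ch_opp => h.
apply: lt_le_trans h _.
apply: le_trans (ler_norm _) _.
by rewrite normrM normrX normrN1 expr1n mul1r.
Qed.
End Cheb.
Arguments ch {R} c k.
Arguments chSS {R} c k.
Arguments cassini {R} c k.
Arguments ch_le {R} c k.
Arguments ch_gt_abs {R} c k.

Section Coef.
Variable R : realFieldType.
Variable r : R.

Lemma coef_int (i j : nat) : (0 < j)%N ->
  - r * r ^+ `|(i : nat) - (j.-1 : nat)|%N + (1 + r ^+ 2) * r ^+ `|(i : nat) - (j : nat)|%N
  - r * r ^+ `|(i : nat) - (j.+1 : nat)|%N = (1 - r ^+ 2) * (i == j)%:R.
Proof.
move=> j0; case: (ltngtP i j) => hij.
- rewrite !distnEr; try lia.
  have -> : (j - i = (j.-1 - i).+1)%N by lia.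
  have -> : (j.+1 - i = (j.-1 - i).+2)%N by lia.
  rewrite mulr0 !exprS; ring.
- rewrite !distnEl; try lia.
  have -> : (i - j = (i - j.+1).+1)%N by lia.
  have -> : (i - j.-1 = (i - j.+1).+2)%N by lia.
  rewrite mulr0 !exprS; ring.
- subst i; rewrite distnn distnS distnEl; last lia.
  have -> : (j - j.-1 = 1)%N by lia.
  rewrite /= mulr1 ?expr0 ?expr1; ring.
Qed.

Lemma coef_first (i : nat) :
  r ^+ `|(i : nat) - (0 : nat)|%N - r * r ^+ `|(i : nat) - (1 : nat)|%N
  = (1 - r ^+ 2) * (i == 0)%N%:R.
Proof.
case: i => [|i]; first by rewrite distnn distnS expr0 mulr1 expr1 expr2.
rewrite distn0 distnEl // subn1 /= mulr0 exprS; ring.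
Qed.

Lemma coef_last (i j : nat) : (i <= j)%N -> (0 < j)%N ->
  r ^+ `|(i : nat) - (j : nat)|%N - r * r ^+ `|(i : nat) - (j.-1 : nat)|%N
  = (1 - r ^+ 2) * (i == j)%:R.
Proof.
move=> hij j0; case: (ltngtP i j) => h; last first.
- subst i; rewrite distnn distnEl; last lia.
  have -> : (j - j.-1 = 1)%N by lia.
  rewrite /= mulr1 ?expr0 ?expr1; ring.
- lia.
rewrite !distnEr; try lia.
have -> : (j - i = (j.-1 - i).+1)%N by lia.
rewrite mulr0 !exprS; ring.
Qed.
End Coef.

Section Eig.
Variable R : realFieldType.
Variable r : R.
Variable n : nat.
Variable v : 'rV[R]_n.

Definition Wf (j : nat) := \sum_(i < n) v 0 i * r ^+ `|(i : nat) - (j : nat)|%N.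
Definition Vf (j : nat) := \sum_(i < n) v 0 i * ((i : nat) == j)%:R.

Lemma Vf_ord (k : 'I_n) : Vf k = v 0 k.
Proof.
rewrite /Vf (bigD1 k) //= eqxx mulr1 big1 ?addr0 // => i hi.
by rewrite val_eqE (negbTE hi) mulr0.
Qed.

Lemma Vf_out j : (n <= j)%N -> Vf j = 0.
Proof.
move=> hj; rewrite /Vf big1 // => i _.
have : (i : nat) != j by have := ltn_ord i; lia.
by move/negbTE => ->; rewrite mulr0.
Qed.

Lemma rel_int j : (0 < j)%N ->
  - r * Wf j.-1 + (1 + r ^+ 2) * Wf j - r * Wf j.+1 = (1 - r ^+ 2) * Vf j.
Proof.
move=> j0; rewrite /Wf /Vf !mulr_sumr -big_split /= -sumrB.
apply: eq_bigr => i _; rewrite [RHS]mulrCA -(@coef_int R r i j j0); ring.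
Qed.

Lemma rel_first : Wf 0 - r * Wf 1 = (1 - r ^+ 2) * Vf 0.
Proof.
rewrite /Wf /Vf !mulr_sumr -sumrB.
apply: eq_bigr => i _; rewrite [RHS]mulrCA -(@coef_first R r i); ring.
Qed.

Lemma rel_last j : (n = j.+1)%N -> (0 < j)%N ->
  Wf j - r * Wf j.-1 = (1 - r ^+ 2) * Vf j.
Proof.
move=> hn j0; rewrite /Wf /Vf !mulr_sumr -sumrB.
apply: eq_bigr => i _.
have hi : (i <= j)%N by have := ltn_ord i; lia.
rewrite [RHS]mulrCA -(@coef_last R r i j hi j0); ring.
Qed.
End Eig.

Section RecSol.
Variable R : realFieldType.

Lemma rec_sol (X : nat -> R) c N :
  (forall k, (k < N)%N -> X k.+2 = c * X k.+1 - X k) ->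
  forall k, (k <= N)%N -> X k.+1 = X 1%N * ch c k.+1 - X 0%N * ch c k.
Proof.
move=> hX; elim/ltn_ind => -[|[|k]] IH hk.
- by rewrite /= mulr1 mulr0 subr0.
- rewrite hX // /=; ring.
rewrite hX; last lia.
rewrite (IH k.+1) ?(IH k) //; try lia.
rewrite !chSS /=; ring.
Qed.
End RecSol.
Arguments rec_sol {R X c N}.
Arguments Wf {R} r {n} v j.
Arguments Vf {R n} v j.



Lemma key (R : realFieldType) (n : nat) (r lam : R) (v : 'rV[R]_n) :
  (2 <= n)%N -> r != 0 -> 1 - r ^+ 2 != 0 ->
  v *m (\matrix_(j < n, k < n) r ^+ `|(j : nat) - (k : nat)|%N) = lam *: v ->
  v != 0 ->
  exists c, lam * (1 + r ^+ 2 - r * c) = 1 - r ^+ 2 /\ lam ^+ 2 = ch c n ^+ 2.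
Proof.
move=> hn r0 r1 hv v0.
have hW : forall j, (j < n)%N -> Wf r v j = lam * Vf v j.
  move=> j hj; have := congr1 (fun M : 'rV[R]_n => M 0 (Ordinal hj)) hv.
  have -> : Vf v j = v 0 (Ordinal hj) by rewrite -(@Vf_ord _ _ v (Ordinal hj)).
  rewrite !mxE => <-; rewrite /Wf; apply: eq_bigr => i _; by rewrite mxE.
have vz : (forall j, (j < n)%N -> Vf v j = 0) -> False.
  move=> h; move/negP: v0; apply; apply/eqP/matrixP => i k.
  by rewrite !mxE (ord1 i) -Vf_ord h.
have Rfirst : lam * (Vf v 0 - r * Vf v 1) = (1 - r ^+ 2) * Vf v 0.
  by rewrite -rel_first (hW 0%N ltac:(lia)) (hW 1%N ltac:(lia)); ring.
have Rint : forall j, (0 < j)%N -> (j.+1 < n)%N ->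
   lam * (- r * Vf v j.-1 + (1 + r ^+ 2) * Vf v j - r * Vf v j.+1) = (1 - r ^+ 2) * Vf v j.
  move=> j j0 hj; rewrite -rel_int // (hW j.-1 ltac:(lia)) (hW j ltac:(lia)) (hW j.+1 ltac:(lia)); ring.
have Rlast : lam * (Vf v n.-1 - r * Vf v n.-2) = (1 - r ^+ 2) * Vf v n.-1.
  rewrite -(@rel_last _ r n v n.-1) ?(hW n.-1 ltac:(lia)) ?(hW n.-1.-1 ltac:(lia)); [ring | lia | lia].
have lam0 : lam != 0.
  apply/negP => /eqP l0; apply: vz => j hj.
  have : (1 - r ^+ 2) * Vf v j = 0.
    case: (posnP j) => [->|j0].
      by rewrite -Rfirst l0 mul0r.
    case: (ltnP j.+1 n) => hj1.
      by rewrite -Rint // l0 mul0r.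
    have -> : j = n.-1 by lia.
    by rewrite -Rlast l0 mul0r.
  by move/eqP; rewrite mulf_eq0 (negbTE r1) /= => /eqP.
set mu := (1 - r ^+ 2) / lam.
set c := (1 + r ^+ 2 - mu) / r.
have hmu : mu = 1 + r ^+ 2 - r * c by rewrite /c; field.
exists c; split; first by rewrite -hmu /mu; field.
have lmu : lam * mu = 1 - r ^+ 2 by rewrite /mu; field.
have Rfirst' : Vf v 0 - r * Vf v 1 = mu * Vf v 0.
  apply: (mulfI lam0); rewrite Rfirst mulrA lmu //.
have Rint' : forall j, (0 < j)%N -> (j.+1 < n)%N ->
   - r * Vf v j.-1 + (1 + r ^+ 2) * Vf v j - r * Vf v j.+1 = mu * Vf v j.
  move=> j j0 hj; apply: (mulfI lam0); rewrite Rint // mulrA lmu //.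
have Rlast' : Vf v n.-1 - r * Vf v n.-2 = mu * Vf v n.-1.
  apply: (mulfI lam0); rewrite Rlast mulrA lmu //.
pose X k := if k == 0%N then r * Vf v 0 else if k == n.+1 then r * Vf v n.-1 else Vf v k.-1.
have hX : forall k, (k < n)%N -> X k.+2 = c * X k.+1 - X k.
  move=> k hk; rewrite /X.
  case: (posnP k) => [->|k0].
    have -> : (2 == n.+1) = false by apply/negbTE; lia.
    rewrite /=.
    have e : r * Vf v 1 = (1 - mu) * Vf v 0 by rewrite mulrBl mul1r -Rfirst'; ring.
    have -> : Vf v 1 = (1 - mu) / r * Vf v 0 by rewrite mulrAC -e; field.
    have -> : (1 == n.+1) = false by apply/negbTE; lia.
    by rewrite /c; field.
  have -> : (k.+2 == 0%N) = false by [].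
  have -> : (k.+1 == 0%N) = false by [].
  have -> : (k.+1 == n.+1) = false by apply/negbTE; lia.
  have -> : (k == n.+1) = false by apply/negbTE; lia.
  case: (ltnP k.+1 n) => hk1.
    have -> : (k.+2 == n.+1) = false by apply/negbTE; lia.
    have e := Rint' k k0 hk1; rewrite /=.
    have -> : Vf v k.+1 = ((1 + r ^+ 2 - mu) * Vf v k - r * Vf v k.-1) / r.
      apply: (mulIf r0); rewrite divfK // mulrBl -e; ring.
    by rewrite /c; field.
  have en : n = k.+1 by lia.
  have -> : (k.+2 == n.+1) = true by apply/eqP; lia.
  rewrite /=.
  have hk' : k.-1 = n.-2 by lia.
  have hk'' : k = n.-1 by lia.
  rewrite hk' hk''.
  have e : r * Vf v n.-2 = (1 - mu) * Vf v n.-1 by rewrite mulrBl mul1r -Rlast'; ring.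
  have -> : Vf v n.-2 = (1 - mu) / r * Vf v n.-1 by rewrite mulrAC -e; field.
  by rewrite /c; field.
move: (@rec_sol R X c n hX) => Hsl.
have X1e : X 1%N = Vf v 0.
  by rewrite /X /= (_ : (1 == n.+1) = false) //; apply/negbTE; lia.
have X0 : X 0%N = r * X 1%N by rewrite X1e.
have Xn : X n.+1 = r * X n.
  rewrite /X eqxx /=.
  have -> : (n == 0%N) = false by apply/negbTE; lia.
  have -> : (n == n.+1) = false by apply/negbTE; lia.
  by [].
have V00 : X 1%N != 0.
  apply/negP => /eqP h1; apply: vz => j hj.
  have := Hsl j (ltnW hj); rewrite X0 h1 mulr0 !mul0r subrr /X /=.
  by rewrite (_ : (j.+1 == n.+1) = false) //; apply/negbTE; lia.
have hA := Hsl n (leqnn n).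
have hB := Hsl n.-1 (leq_pred n).
rewrite (prednK (ltnW hn)) in hB.
have E : ch c n.+1 - 2 * r * ch c n + r ^+ 2 * ch c n.-1 = 0.
  apply: (mulfI V00); rewrite mulr0.
  have h := Xn; rewrite hA hB X0 in h.
  have -> : X 1%N * (ch c n.+1 - 2 * r * ch c n + r ^+ 2 * ch c n.-1) =
    (X 1%N * ch c n.+1 - r * X 1%N * ch c n) - r * (X 1%N * ch c n - r * X 1%N * ch c n.-1) by ring.
  by rewrite h subrr.
have mu0 : mu != 0 by apply/negP => /eqP h; move: r1; rewrite -lmu h mulr0 eqxx.
have [m hm] : exists m, n = m.+1 by exists n.-1; lia.
rewrite hm in E *.
have {}E : (c * ch c m.+1 - ch c m) - 2 * r * ch c m.+1 + r ^+ 2 * ch c m = 0 by exact E.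
have cas := cassini c m.
rewrite chSS in cas.
set a := ch c m.+1 in E cas *; set b := ch c m in E cas.
have id : mu ^+ 2 * a ^+ 2 - (1 - r ^+ 2) ^+ 2 =
   ((c * a - b) - 2 * r * a + r ^+ 2 * b) * (b - 2 * r * a + r ^+ 2 * (c * a - b))
   + (1 - r ^+ 2) ^+ 2 * ((a ^+ 2 - (c * a - b) * b) - 1) by rewrite hmu; ring.
rewrite E cas mul0r subrr mulr0 addr0 in id.
have ma : mu ^+ 2 * a ^+ 2 = (1 - r ^+ 2) ^+ 2 by apply/eqP; rewrite -subr_eq0 id.
apply: (mulIf (expf_neq0 2 mu0)).
by rewrite -exprMn lmu -ma mulrC.
Qed.

Lemma gersh (R : realFieldType) (n : nat) (r lam : R) (v : 'rV[R]_n) :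
  0 <= r -> r <= 1 ->
  v *m (\matrix_(j < n, k < n) r ^+ `|(j : nat) - (k : nat)|%N) = lam *: v ->
  v != 0 -> `|lam| <= n%:R.
Proof.
move=> r0 r1 hv v0.
case: (pickP (fun k => v 0 k != 0)) => [k0 hk0 | h]; last first.
  move/negP: v0; case; apply/eqP/matrixP => i k.
  by rewrite (ord1 i) !mxE; move/negbT: (h k); rewrite negbK => /eqP.
case: (@arg_maxP _ _ _ k0 xpredT (fun i => `|v 0 i|)) => // i _ hmax.
have vi : 0 < `|v 0 i|.
  apply: lt_le_trans (hmax k0 isT); by rewrite normr_gt0.
have e := congr1 (fun M : 'rV[R]_n => M 0 i) hv.
rewrite /= !mxE in e.
have : `|lam| * `|v 0 i| <= n%:R * `|v 0 i|.
  rewrite -normrM -e.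
  apply: le_trans (ler_norm_sum _ _ _) _.
  apply: le_trans (_ : \sum_(j < n) `|v 0 i| <= _).
    apply: ler_sum => j _; rewrite mxE normrM.
    rewrite -[X in _ <= X]mulr1; apply: ler_pM => //.
      exact: hmax.
    rewrite ger0_norm ?exprn_ge0 //; exact: exprn_ile1.
  by rewrite sumr_const card_ord mulr_natl.
by rewrite ler_pM2r.
Qed.

Lemma ord_iff (R : realType) (r lam c : R) :
  r != 0 -> 1 - r ^+ 2 != 0 -> lam * (1 + r ^+ 2 - r * c) = 1 - r ^+ 2 ->
  (sigma_range r lam <-> `|c| <= 2).
Proof.
move=> r0 r1 hl.
have l0 : lam != 0 by apply/negP => /eqP h; move: r1; rewrite -hl h mul0r eqxx.
have D0 : 1 + r ^+ 2 - r * c != 0 by apply/negP => /eqP h; move: r1; rewrite -hl h mulr0 eqxx.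
split.
  case=> t _; rewrite /sigma => hs.
  set D := 1 - 2 * r * cos t + r ^+ 2 in hs.
  have DD : D != 0 by apply/negP => /eqP h; move: l0; rewrite -hs h invr0 mulr0 eqxx.
  have hD : lam * D = 1 - r ^+ 2 by rewrite -hs divfK.
  have e : 1 + r ^+ 2 - r * c = D by apply: (mulfI l0); rewrite hl hD.
  have ec : c = 2 * cos t.
    apply: (mulfI r0); move: e; rewrite /D => e.
    have : r * c = 2 * r * cos t by lra.
    by move=> ->; ring.
  rewrite ec normrM ger0_norm // -[X in _ <= X]mulr1 ler_pM2l //; exact: cos_max.
move=> hc.
have hc' : -1 <= c / 2 <= 1 by move: hc; rewrite ler_norml => /andP[h1 h2]; apply/andP; split; lra.
exists (acos (c / 2)).
  rewrite /=; apply/andP; split; last exact: acos_lepi.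
  have := acos_ge0 hc'; have := pi_gt0 R; lra.
rewrite /sigma acosK; last by rewrite in_itv /=.
have -> : 1 - 2 * r * (c / 2) + r ^+ 2 = 1 + r ^+ 2 - r * c by field.
by rewrite -hl mulfK.
Qed.

Theorem corollary6p9 (R : realType) (n : nat) (rho lam : R) :
  (2 <= n)%N -> 0 <= rho -> eigenvalue (KMS n rho) lam ->
  (extraordinary rho lam <-> n%:R < `|lam|).
Proof.
move=> hn hr /eigenvalueP [v hv v0].
rewrite /extraordinary /ordinary.
case: ifP => hcase.
  have hr1 : rho <= 1.
    move: hcase => /orP[/orP[/eqP->|/eqP->]|/eqP->] //; lra.
  have := @gersh _ _ rho lam v hr hr1 hv v0 => hg.
  split => // h; lra.
have r0 : rho != 0 by apply/negP => h; rewrite h in hcase.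
have r1 : rho != 1 by apply/negP => h; rewrite h orbT in hcase.
have r2 : 1 - rho ^+ 2 != 0.
  apply/negP => /eqP h.
  have : (1 - rho) * (1 + rho) = 0 by rewrite -h; ring.
  move/eqP; rewrite mulf_eq0 => /orP[]; [rewrite subr_eq0 eq_sym (negbTE r1) // | ].
  move/eqP => h2; have : rho = -1 by lra. move=> h3; move: r0; rewrite h3. lra.
have [c [hl hsq]] := @key _ _ rho lam v hn r0 r2 hv v0.
rewrite (@ord_iff _ rho lam c r0 r2 hl).
have ha : `|lam| = `|ch c n|.
  apply/eqP; rewrite -(@eqrXn2 _ 2) // -!normrX hsq //.
split.
  move=> h; rewrite ha; apply: ch_gt_abs => //; rewrite ltNge; exact/negP.
rewrite ha => h hc; have := ch_le c n hc; lra.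
Qed.
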